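(* Let $G$ be one of the triangular lattice, the hexagonal lattice, or the kagome lattice, and let $\Omega_G\subset\mathbb{R}^2$ be the orbit of the Grover walk on $G$ (defined in the context). Then \[ \Omega_G \subseteq \{ (x,y)\in \mathbb{R}^2 \;:\; x^2+s(G)\,xy+y^2\leq r(G) \}, \] where $r(G)=1/2$, $1/6$, $1/4$ and $s(G)=-1$, $+1$, $+1$ when $G$ is the triangular, hexagonal, kagome lattice respectively.
   Context: The Grover walk on a graph acts on $\ell^2$ of the symmetric arcs by $(U\psi)(e)=\sum_{f:\,t(f)=o(e)}\big(\tfrac{2}{\deg o(e)}-\delta_{\bar e,f}\big)\psi(f)$. For a crystal lattice (a $\mathbb{Z}^2$-periodic graph with finite quotient graph $G_0$ having vertex set $V_0$), after Fourier transform in the period lattice with wave vector $k=(k_1,k_2)\in[0,2\pi)^2$ (with respect to a chosen basis of the period lattice), the underlying isotropic random walk becomes a twisted random walk $\hat P_k$ on $\ell^2(V_0)$ whose eigenvalues are written $\cos\gamma_j(k)$, $j=1,\dots,|V_0|$, with $\gamma_j(k)=\arccos(\cdot)\in[0,\pi]$. The orbit of the Grover walk is $\Omega_G=\bigcup_{j}\{\nabla\gamma_j(k)=(\partial\gamma_j/\partial k_1,\partial\gamma_j/\partial k_2)\;:\; k\in[0,2\pi)^2,\ \gamma_j \text{ differentiable at } k\}$. Concretely, with the standard choices of period basis used in the paper, the eigenvalues are: (i) triangular lattice ($|V_0|=1$): $\cos\gamma(k)=\tfrac13(\cos k_1+\cos k_2+\cos(k_1+k_2))$; (ii) hexagonal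 lattice ($|V_0|=2$): $\cos\gamma(k)=\pm\tfrac13|1+e^{ik_1}+e^{ik_2}|$; (iii) kagome lattice ($|V_0|=3$): $\cos\gamma(k)\in\{\tfrac14(1\pm|1+e^{ik_1}+e^{ik_2}|)\}\cup\{-\tfrac12\}$. *)

(* Defs.v *)
From Stdlib Require Import Reals Lra List.
Open Scope R_scope.

Inductive lattice := Triangular | Hexagonal | Kagome.

(* |1 + e^{i k1} + e^{i k2}| *)
Definition absz (k1 k2 : R) : R :=
  sqrt ((1 + cos k1 + cos k2)^2 + (sin k1 + sin k2)^2).

(* The eigenvalues cos(gamma_j(k)) of the twisted random walk, one function per branch j. *)
Definition cos_eigs (G : lattice) : list (R -> R -> R) :=
  match G with
  | Triangular => (fun k1 k2 => (cos k1 + cos k2 + cos (k1 + k2)) / 3) :: nil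
  | Hexagonal => (fun k1 k2 => absz k1 k2 / 3) :: (fun k1 k2 => - (absz k1 k2 / 3)) :: nil
  | Kagome => (fun k1 k2 => (1 + absz k1 k2) / 4) :: (fun k1 k2 => (1 - absz k1 k2) / 4)
              :: (fun _ _ => - (1/2)) :: nil
  end.

Definition gammas (G : lattice) : list (R -> R -> R) :=
  map (fun c => fun k1 k2 => acos (c k1 k2)) (cos_eigs G).

Definition has_gradient (f : R -> R -> R) (k1 k2 g1 g2 : R) : Prop :=
  forall eps, 0 < eps -> exists delta, 0 < delta /\
    forall h1 h2, sqrt (h1^2 + h2^2) < delta ->
      Rabs (f (k1 + h1) (k2 + h2) - f k1 k2 - (g1 * h1 + g2 * h2))
        <= eps * sqrt (h1^2 + h2^2).

Definition orbit (G : lattice) (x y : R) : Prop :=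
  exists gamma, In gamma (gammas G) /\
    exists k1 k2, 0 <= k1 < 2 * PI /\ 0 <= k2 < 2 * PI /\
      has_gradient gamma k1 k2 x y.

Definition r_of (G : lattice) : R :=
  match G with Triangular => 1/2 | Hexagonal => 1/6 | Kagome => 1/4 end.

Definition s_of (G : lattice) : R :=
  match G with Triangular => -1 | Hexagonal => 1 | Kagome => 1 end.

(* Main.v *)
Require Import Defs.
From Stdlib Require Import Reals List.
From Stdlib Require Import Lra Psatz.
From Coquelicot Require Import Coquelicot.
Open Scope R_scope.

Lemma sqrt_sq1 h : sqrt (h^2 + 0^2) = Rabs h.
Proof. replace (h^2+0^2) with (Rsqr h) by (unfold Rsqr; ring). apply sqrt_Rsqr_abs. Qed.
Lemma sqrt_sq2 h : sqrt (0^2 + h^2) = Rabs h.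
Proof. replace (0^2+h^2) with (Rsqr h) by (unfold Rsqr; ring). apply sqrt_Rsqr_abs. Qed.

Lemma div_small N h eps : h <> 0 -> 0 < eps -> Rabs N <= eps/2 * Rabs h -> Rabs (N / h) < eps.
Proof.
  intros Hh He HN.
  assert (Ha: 0 < Rabs h) by (apply Rabs_pos_lt; auto).
  unfold Rdiv. rewrite Rabs_mult, Rabs_inv.
  assert (Rabs N * / Rabs h <= eps/2 * Rabs h * / Rabs h).
  { apply Rmult_le_compat_r; auto. left; apply Rinv_0_lt_compat; auto. }
  replace (eps/2 * Rabs h * / Rabs h) with (eps/2) in H by (field; lra). lra.
Qed.

Lemma grad_d1 f k1 k2 g1 g2 : has_gradient f k1 k2 g1 g2 ->
  derivable_pt_lim (fun t => f t k2) k1 g1.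
Proof.
  intros H eps Heps.
  destruct (H (eps/2) ltac:(lra)) as [d [Hd Hh]].
  exists (mkposreal d Hd). intros h Hh0 Hhd. simpl in Hhd.
  specialize (Hh h 0). rewrite sqrt_sq1, Rplus_0_r in Hh.
  specialize (Hh Hhd).
  replace ((f (k1+h) k2 - f k1 k2)/h - g1) with ((f (k1+h) k2 - f k1 k2 - (g1*h + g2*0))/h)
    by (field; auto).
  apply div_small; auto.
Qed.

Lemma grad_d2 f k1 k2 g1 g2 : has_gradient f k1 k2 g1 g2 ->
  derivable_pt_lim (fun t => f k1 t) k2 g2.
Proof.
  intros H eps Heps.
  destruct (H (eps/2) ltac:(lra)) as [d [Hd Hh]].
  exists (mkposreal d Hd). intros h Hh0 Hhd. simpl in Hhd.
  specialize (Hh 0 h). rewrite sqrt_sq2, Rplus_0_r in Hh.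
  specialize (Hh Hhd).
  replace ((f k1 (k2+h) - f k1 k2)/h - g2) with ((f k1 (k2+h) - f k1 k2 - (g1*0 + g2*h))/h)
    by (field; auto).
  apply div_small; auto.
Qed.

Lemma grad_zero_max f k1 k2 g1 g2 : has_gradient f k1 k2 g1 g2 ->
  (forall a b, f a b <= f k1 k2) -> g1 = 0 /\ g2 = 0.
Proof.
  intros H M. split.
  - pose proof (grad_d1 _ _ _ _ _ H) as D.
    pose (pr := exist _ g1 D : derivable_pt (fun t => f t k2) k1).
    rewrite <- (derive_pt_eq_0 _ _ _ pr D).
    apply (deriv_maximum _ (k1-1) (k1+1)); try lra. intros; apply M.
  - pose proof (grad_d2 _ _ _ _ _ H) as D.
    pose (pr := exist _ g2 D : derivable_pt (fun t => f k1 t) k2).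
    rewrite <- (derive_pt_eq_0 _ _ _ pr D).
    apply (deriv_maximum _ (k2-1) (k2+1)); try lra. intros; apply M.
Qed.

Lemma grad_zero_min f k1 k2 g1 g2 : has_gradient f k1 k2 g1 g2 ->
  (forall a b, f k1 k2 <= f a b) -> g1 = 0 /\ g2 = 0.
Proof.
  intros H M. split.
  - pose proof (grad_d1 _ _ _ _ _ H) as D.
    pose (pr := exist _ g1 D : derivable_pt (fun t => f t k2) k1).
    rewrite <- (derive_pt_eq_0 _ _ _ pr D).
    apply (deriv_minimum _ (k1-1) (k1+1)); try lra. intros; apply M.
  - pose proof (grad_d2 _ _ _ _ _ H) as D.
    pose (pr := exist _ g2 D : derivable_pt (fun t => f k1 t) k2).
    rewrite <- (derive_pt_eq_0 _ _ _ pr D).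
    apply (deriv_minimum _ (k2-1) (k2+1)); try lra. intros; apply M.
Qed.

Lemma acos_ge1 x : 1 <= x -> acos x = 0.
Proof. intros. unfold acos. destruct (Rle_dec x (-1)); [lra|]. destruct (Rle_dec 1 x); [reflexivity| lra]. Qed.
Lemma acos_lem1 x : x <= -1 -> acos x = PI.
Proof. intros. unfold acos. destruct (Rle_dec x (-1)); [reflexivity|lra]. Qed.

Lemma acos_mono x y : x <= y -> acos y <= acos x.
Proof.
  intros Hxy.
  destruct (Rle_dec 1 y) as [r|n1]. { rewrite (acos_ge1 y r). apply acos_bound. }
  destruct (Rle_dec x (-1)) as [r|n2]. { rewrite (acos_lem1 x r). apply acos_bound. }
  destruct (Rle_dec (acos y) (acos x)) as [|Hn]; auto.
  exfalso. apply Rnot_le_lt in Hn.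
  destruct (acos_bound x); destruct (acos_bound y).
  pose proof (cos_decreasing_1 (acos x) (acos y) ltac:(lra) ltac:(lra) ltac:(lra) ltac:(lra) Hn) as Hc.
  rewrite !cos_acos in Hc by lra. lra.
Qed.

Lemma chain1 (c : R -> R) x d : -1 < c x < 1 -> derivable_pt_lim c x d ->
  derivable_pt_lim (fun t => acos (c t)) x (-1 / sqrt (1 - (c x)²) * d).
Proof.
  intros Hr Hd.
  assert (Ha : derivable_pt_lim acos (c x) (-1 / sqrt (1 - (c x)²))).
  { apply (derive_pt_eq_1 _ _ _ (derivable_pt_acos _ Hr)). apply derive_pt_acos. }
  exact (derivable_pt_lim_comp c acos x d _ Hd Ha).
Qed.

Lemma chain2 (c : R -> R -> R) k1 k2 g1 g2 d1 d2 :
  has_gradient (fun a b => acos (c a b)) k1 k2 g1 g2 -> -1 < c k1 k2 < 1 ->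
  derivable_pt_lim (fun t => c t k2) k1 d1 -> derivable_pt_lim (fun t => c k1 t) k2 d2 ->
  g1 = -1 / sqrt (1 - (c k1 k2)²) * d1 /\ g2 = -1 / sqrt (1 - (c k1 k2)²) * d2.
Proof.
  intros H Hr D1 D2. split.
  - apply (uniqueness_limite (fun t => acos (c t k2)) k1).
    + exact (grad_d1 _ _ _ _ _ H).
    + apply (chain1 (fun t => c t k2)); auto.
  - apply (uniqueness_limite (fun t => acos (c k1 t)) k2).
    + exact (grad_d2 _ _ _ _ _ H).
    + apply (chain1 (fun t => c k1 t)); auto.
Qed.

Lemma final_bound s r c d1 d2 g1 g2 : -1 < c < 1 ->
  g1 = -1 / sqrt (1 - c²) * d1 -> g2 = -1 / sqrt (1 - c²) * d2 ->
  d1^2 + s*d1*d2 + d2^2 <= r * (1 - c²) -> g1^2 + s*g1*g2 + g2^2 <= r.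
Proof.
  intros Hc -> -> H.
  assert (Hp : 0 < 1 - c²) by (unfold Rsqr; nra).
  pose proof (sqrt_lt_R0 _ Hp) as Hs. pose proof (sqrt_sqrt _ (Rlt_le _ _ Hp)) as Hss.
  set (t := sqrt (1-c²)) in *.
  replace ((-1/t*d1)^2 + s*(-1/t*d1)*(-1/t*d2) + (-1/t*d2)^2)
    with ((d1^2 + s*d1*d2+d2^2) / (t*t)) by (field; lra).
  rewrite Hss. apply Rmult_le_reg_r with (1-c²); auto. unfold Rdiv.
  rewrite Rmult_assoc, Rinv_l; lra.
Qed.

Lemma grad_ext f f' k1 k2 g1 g2 : (forall a b, f a b = f' a b) ->
  has_gradient f k1 k2 g1 g2 -> has_gradient f' k1 k2 g1 g2.
Proof.
  intros E H eps He. destruct (H eps He) as [d [Hd Hh]]. exists d. split; auto.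
  intros h1 h2 Hl. rewrite <- !E. auto.
Qed.
Lemma tri_ineq k1 k2 :
  let c := (cos k1 + cos k2 + cos (k1 + k2)) / 3 in
  (-(sin k1 + sin (k1+k2))/3)^2 + -1 * (-(sin k1 + sin (k1+k2))/3) * (-(sin k2 + sin (k1+k2))/3)
   + (-(sin k2 + sin (k1+k2))/3)^2 <= 1/2 * (1 - c²).
Proof.
  intros c. unfold c, Rsqr. rewrite cos_plus, sin_plus.
  pose proof (sin2_cos2 k1) as H1. pose proof (sin2_cos2 k2) as H2. unfold Rsqr in H1, H2.
  set (p := cos k1) in *. set (q := cos k2) in *. set (u := sin k1) in *. set (v := sin k2) in *.
  assert (Z1 : u^2+p^2-1 = 0) by lra. assert (Z2 : v^2+q^2-1 = 0) by lra.
  set (m := p*q - u*v).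
  set (L := (-(u + (u*q + p*v))/3)^2 + -1 * (-(u + (u*q + p*v))/3) * (-(v + (u*q + p*v))/3)
   + (-(v + (u*q + p*v))/3)^2).
  set (Rr := 1/2 * (1 - (p + q + m)/3 * ((p + q + m)/3))).
  assert (E : 18 * (Rr - L) = (p-1)^2 + (q-1)^2 + (m-1)^2
     + (-2*v^2 - 2 - 2*q - 2*q^2) * (u^2+p^2-1) + (-2*p-4) * (v^2+q^2-1)).
  { unfold Rr, L, m. clear. field. }
  rewrite Z1, Z2 in E.
  pose proof (pow2_ge_0 (p-1)); pose proof (pow2_ge_0 (q-1)); pose proof (pow2_ge_0 (m-1)).
  clearbody L Rr m p q u v c. lra.
Qed.

Lemma tri_case k1 k2 g1 g2 :
  has_gradient (fun a b => acos ((cos a + cos b + cos (a + b)) / 3)) k1 k2 g1 g2 ->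
  g1^2 + (-1)*g1*g2 + g2^2 <= 1/2.
Proof.
  intros H.
  set (c := fun a b => (cos a + cos b + cos (a+b))/3).
  change (has_gradient (fun a b => acos (c a b)) k1 k2 g1 g2) in H.
  destruct (Rle_dec 1 (c k1 k2)) as [r|n1].
  { destruct (grad_zero_min _ _ _ _ _ H) as [-> ->]. 
    - intros; simpl. rewrite (acos_ge1 _ r). apply acos_bound.
    - lra. }
  destruct (Rle_dec (c k1 k2) (-1)) as [r|n2].
  { destruct (grad_zero_max _ _ _ _ _ H) as [-> ->]. 
    - intros; simpl. rewrite (acos_lem1 _ r). apply acos_bound.
    - lra. }
  assert (Hr : -1 < c k1 k2 < 1) by lra.
  destruct (chain2 c k1 k2 g1 g2 (-(sin k1 + sin (k1+k2))/3) (-(sin k2 + sin (k1+k2))/3) H Hr)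
    as [E1 E2].
  - apply is_derive_Reals. unfold c. auto_derive; [exact I| field].
  - apply is_derive_Reals. unfold c. auto_derive; [exact I| field].
  - apply (final_bound _ _ _ _ _ _ _ Hr E1 E2). apply tri_ineq.
Qed.
Definition Sf a b := (1 + cos a + cos b)^2 + (sin a + sin b)^2.
Definition Xf k1 k2 := 2*(1+cos k1+cos k2)*(-sin k1) + 2*(sin k1+sin k2)*cos k1.
Definition Yf k1 k2 := 2*(1+cos k1+cos k2)*(-sin k2) + 2*(sin k1+sin k2)*cos k2.

Lemma hex_ineq k1 k2 :
  Xf k1 k2 ^2 + Xf k1 k2 * Yf k1 k2 + Yf k1 k2 ^2 <= 2/3 * Sf k1 k2 * (9 - Sf k1 k2).
Proof.
  unfold Xf, Yf, Sf.
  pose proof (sin2_cos2 k1) as H1. pose proof (sin2_cos2 k2) as H2. unfold Rsqr in H1, H2.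
  set (p := cos k1) in *. set (q := cos k2) in *. set (u := sin k1) in *. set (v := sin k2) in *.
  assert (Z1 : u^2+p^2-1 = 0) by lra. assert (Z2 : v^2+q^2-1 = 0) by lra.
  assert (E : 3 * (2/3 * ((1 + p + q)^2 + (u+v)^2) * (9 - ((1 + p + q)^2 + (u+v)^2))
      - ((2*(1+p+q)*(-u) + 2*(u+v)*p)^2 + (2*(1+p+q)*(-u) + 2*(u+v)*p) * (2*(1+p+q)*(-v) + 2*(u+v)*q)
         + (2*(1+p+q)*(-v) + 2*(u+v)*q)^2))
    = (2*(p*q+u*v) - p - q)^2 + 3 * (1 - (p*q+u*v)) * (1 - p*q + u*v)
      + (-8*p - 20*q - 2*p^2 - 8*p*q - 16*q^2 - 2*u^2 - 8*u*v - 13*v^2) * (u^2+p^2-1)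
      + (-13 - 20*p - 8*q - 3*p^2 - 8*p*q - 2*q^2 - 8*u*v - 2*v^2) * (v^2+q^2-1)).
  { clear. field. }
  rewrite Z1, Z2 in E.
  assert (F1 : 2 * (1 - (p*q+u*v)) = (p-q)^2 + (u-v)^2 - (u^2+p^2-1) - (v^2+q^2-1)) by (clear; field).
  assert (F2 : 2 * (1 - p*q + u*v) = (p-q)^2 + (u+v)^2 - (u^2+p^2-1) - (v^2+q^2-1)) by (clear; field).
  rewrite Z1, Z2 in F1, F2.
  assert (G1 : 0 <= 1 - (p*q+u*v)) by (pose proof (pow2_ge_0 (p-q)); pose proof (pow2_ge_0 (u-v)); lra).
  assert (G2 : 0 <= 1 - p*q + u*v) by (pose proof (pow2_ge_0 (p-q)); pose proof (pow2_ge_0 (u+v)); lra).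
  pose proof (Rmult_le_pos _ _ G1 G2).
  pose proof (pow2_ge_0 (2*(p*q+u*v) - p - q)).
  clearbody p q u v. lra.
Qed.

Lemma absz_eq a b : absz a b = sqrt (Sf a b).
Proof. reflexivity. Qed.

Lemma absz_d1 k1 k2 : 0 < Sf k1 k2 ->
  derivable_pt_lim (fun t => absz t k2) k1 (/(2*sqrt (Sf k1 k2)) * Xf k1 k2).
Proof.
  intros HS.
  apply (derivable_pt_lim_comp (fun t => Sf t k2) sqrt).
  - apply is_derive_Reals. unfold Sf, Xf. auto_derive; [exact I| field].
  - apply derivable_pt_lim_sqrt; auto.
Qed.

Lemma absz_d2 k1 k2 : 0 < Sf k1 k2 ->
  derivable_pt_lim (fun t => absz k1 t) k2 (/(2*sqrt (Sf k1 k2)) * Yf k1 k2).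
Proof.
  intros HS.
  apply (derivable_pt_lim_comp (fun t => Sf k1 t) sqrt).
  - apply is_derive_Reals. unfold Sf, Yf. auto_derive; [exact I| field].
  - apply derivable_pt_lim_sqrt; auto.
Qed.

Lemma affine_d (f : R -> R) x l al be :
  derivable_pt_lim f x l -> derivable_pt_lim (fun t => al + be * f t) x (0 + be * l).
Proof.
  intros D.
  apply (derivable_pt_lim_plus (fun _ => al) (fun t => be * f t)).
  - apply derivable_pt_lim_const.
  - apply (derivable_pt_lim_scal f be x l D).
Qed.

Lemma hk_case al be r k1 k2 g1 g2 :
  0 <= r ->
  (forall sg, 0 < sg -> -1 < al + be*sg < 1 ->
      be^2 * (2/3) * sg^2 * (9 - sg^2) <= 4 * sg^2 * (r * (1 - (al+be*sg)²))) ->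
  has_gradient (fun a b => acos (al + be * absz a b)) k1 k2 g1 g2 ->
  g1^2 + 1*g1*g2 + g2^2 <= r.
Proof.
  intros Hr0 Hcond H.
  set (c := fun a b => al + be * absz a b).
  change (has_gradient (fun a b => acos (c a b)) k1 k2 g1 g2) in H.
  destruct (Rle_dec 1 (c k1 k2)) as [rr|n1].
  { destruct (grad_zero_min _ _ _ _ _ H) as [-> ->].
    - intros; simpl. rewrite (acos_ge1 _ rr). apply acos_bound.
    - lra. }
  destruct (Rle_dec (c k1 k2) (-1)) as [rr|n2].
  { destruct (grad_zero_max _ _ _ _ _ H) as [-> ->].
    - intros; simpl. rewrite (acos_lem1 _ rr). apply acos_bound.
    - lra. }
  assert (Hr : -1 < c k1 k2 < 1) by lra.
  assert (Hpos : forall a b, 0 <= absz a b) by (intros; apply sqrt_pos).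
  destruct (Req_dec (absz k1 k2) 0) as [Z|NZ].
  { destruct (Rle_dec 0 be) as [Hb|Hb].
    - destruct (grad_zero_max _ _ _ _ _ H) as [-> ->].
      + intros a b. apply acos_mono. unfold c. rewrite Z.
        pose proof (Hpos a b). pose proof (Rmult_le_pos _ _ Hb H0). lra.
      + lra.
    - destruct (grad_zero_min _ _ _ _ _ H) as [-> ->].
      + intros a b. apply acos_mono. unfold c. rewrite Z.
        pose proof (Hpos a b). assert (0 <= -be) by lra.
        pose proof (Rmult_le_pos _ _ H1 H0). lra.
      + lra. }
  assert (HS0 : 0 <= Sf k1 k2) by (unfold Sf; pose proof (pow2_ge_0 (1 + cos k1 + cos k2));
     pose proof (pow2_ge_0 (sin k1 + sin k2)); lra).
  assert (HS : 0 < Sf k1 k2).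
  { destruct HS0 as [|E]; auto. exfalso. apply NZ. rewrite absz_eq, <- E. apply sqrt_0. }
  pose proof (sqrt_lt_R0 _ HS) as Hsg. pose proof (sqrt_sqrt _ HS0) as Hss.
  destruct (chain2 c k1 k2 g1 g2 (0 + be * (/(2*sqrt (Sf k1 k2)) * Xf k1 k2))
      (0 + be * (/(2*sqrt (Sf k1 k2)) * Yf k1 k2)) H Hr) as [E1 E2].
  - apply affine_d. apply absz_d1; auto.
  - apply affine_d. apply absz_d2; auto.
  - apply (final_bound _ _ _ _ _ _ _ Hr E1 E2).
    pose proof (hex_ineq k1 k2) as HQ.
    assert (Hc : c k1 k2 = al + be * sqrt (Sf k1 k2)) by reflexivity.
    rewrite Hc. rewrite Hc in Hr.
    specialize (Hcond _ Hsg Hr).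
    set (sg := sqrt (Sf k1 k2)) in *.
    rewrite <- Hss in HQ.
    set (X := Xf k1 k2) in *. set (Y := Yf k1 k2) in *.
    clearbody sg X Y.
    assert (P : 0 < 4 * sg^2) by nra.
    apply Rmult_le_reg_r with (4 * sg^2); auto.
    replace (((0 + be * (/ (2 * sg) * X)) ^ 2 + 1 * (0 + be * (/ (2 * sg) * X)) * (0 + be * (/ (2 * sg) * Y)) +
      (0 + be * (/ (2 * sg) * Y)) ^ 2) * (4 * sg^2)) with (be^2 * (X^2 + X*Y + Y^2)) by (field; lra).
    apply Rle_trans with (be^2 * (2/3 * (sg*sg) * (9 - sg*sg))).
    + apply Rmult_le_compat_l; [apply pow2_ge_0 | exact HQ].
    + replace (be^2 * (2/3 * (sg*sg) * (9 - sg*sg))) with (be ^ 2 * (2 / 3) * sg ^ 2 * (9 - sg ^ 2)) by ring.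
      rewrite (Rmult_comm (r * _)). exact Hcond.
Qed.
Theorem theorem4 : forall (G : lattice) (x y : R),
  orbit G x y -> x^2 + s_of G * x * y + y^2 <= r_of G.
Proof.
  intros G x y [gamma [Hin [k1 [k2 [_ [_ H]]]]]].
  destruct G; simpl in Hin; simpl.
  - destruct Hin as [<- | []]. exact (tri_case _ _ _ _ H).
  - destruct Hin as [<- | [<- | []]].
    + apply (hk_case 0 (1/3) _ k1 k2); [lra| |].
      * intros sg Hs Hr. unfold Rsqr. nra.
      * eapply grad_ext; [|exact H]. intros; simpl. f_equal. field.
    + apply (hk_case 0 (-1/3) _ k1 k2); [lra| |].
      * intros sg Hs Hr. unfold Rsqr. nra.
      * eapply grad_ext; [|exact H]. intros; simpl. f_equal. field.
  - destruct Hin as [<- | [<- | [<- | []]]].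
    + apply (hk_case (1/4) (1/4) _ k1 k2); [lra| |].
      * intros sg Hs Hr. unfold Rsqr.
        assert (0 <= sg^2 * ((3 - sg) * (9 + sg))).
        { apply Rmult_le_pos; [apply pow2_ge_0| apply Rmult_le_pos; lra]. }
        nra.
      * eapply grad_ext; [|exact H]. intros; simpl. f_equal. field.
    + apply (hk_case (1/4) (-1/4) _ k1 k2); [lra| |].
      * intros sg Hs Hr. unfold Rsqr.
        assert (0 <= sg^2 * ((9 - sg) * (3 + sg))).
        { apply Rmult_le_pos; [apply pow2_ge_0| apply Rmult_le_pos; lra]. }
        nra.
      * eapply grad_ext; [|exact H]. intros; simpl. f_equal. field.
    + destruct (grad_zero_max _ _ _ _ _ H) as [-> ->].
      * intros; apply Rle_refl.
      * lra.
Qed.
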